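(* Let $F$ be a free group of rank greater than one. Then there exist subgroups $A, B \leq F$ and an isomorphism $\phi: A \to B$ such that the HNN extension $(F, A, B, t, \phi)$ is not left-orderable.
   Context: Given a group $G$, subgroups $A, B \leq G$ and an isomorphism $\phi: A \to B$, the HNN extension $(G, A, B, t, \phi)$ is the quotient of the free product $G \ast \langle t \rangle$ (with $\langle t\rangle$ infinite cyclic) by the normal closure of the set $\{ t a t^{-1} \phi(a)^{-1} : a \in A\}$. A group is left-orderable if it admits a total order invariant under left multiplication. *)

(* Defs.v *)
(* Groups given by presentations, encoded concretely as words
   modulo the congruence generated by the relators and free cancellation. *)
From Stdlib Require Import List.
Import ListNotations.
Set Implicit Arguments.

(* A letter (y, true) stands for the generator y, (y, false) for y^-1. *)
Definition word (Y : Type) : Type := list (Y * bool).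

Definition inv_letter {Y : Type} (l : Y * bool) : Y * bool := (fst l, negb (snd l)).
Definition inv_word {Y : Type} (w : word Y) : word Y := rev (map inv_letter w).

Inductive cong {Y : Type} (R : word Y -> word Y -> Prop) : word Y -> word Y -> Prop :=
| cong_base : forall u v l r, R l r -> cong R (u ++ l ++ v) (u ++ r ++ v)
| cong_refl : forall w, cong R w w
| cong_sym : forall w1 w2, cong R w1 w2 -> cong R w2 w1
| cong_trans : forall w1 w2 w3, cong R w1 w2 -> cong R w2 w3 -> cong R w1 w3.

Definition free_rel {Y : Type} (l r : word Y) : Prop :=
  exists (y : Y) (b : bool), l = [(y, b); (y, negb b)] /\ r = [].

Definition feq {X : Type} (u v : word X) : Prop := cong (@free_rel X) u v.

Definition is_subgroup {X : Type} (A : word X -> Prop) : Prop :=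
  A [] /\
  (forall u v, A u -> A v -> A (u ++ v)) /\
  (forall u, A u -> A (inv_word u)) /\
  (forall u v, feq u v -> A u -> A v).

Definition is_iso {X : Type} (A B : word X -> Prop) (phi : word X -> word X) : Prop :=
  (forall u v, A u -> feq u v -> feq (phi u) (phi v)) /\
  (forall u, A u -> B (phi u)) /\
  (forall u v, A u -> A v -> feq (phi (u ++ v)) (phi u ++ phi v)) /\
  (forall u v, A u -> A v -> feq (phi u) (phi v) -> feq u v) /\
  (forall w, B w -> exists u, A u /\ feq (phi u) w).

(* Generators of the HNN extension: Some x for x in X, None for the stable letter t. *)
Definition liftw {X : Type} (w : word X) : word (option X) :=
  map (fun l => (Some (fst l), snd l)) w.

Definition hnn_rel {X : Type} (A : word X -> Prop) (phi : word X -> word X)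
  (l r : word (option X)) : Prop :=
  free_rel l r \/
  exists a, A a /\ l = (None, true) :: liftw a ++ [(None, false)] /\ r = liftw (phi a).

Definition left_orderable_pres {Y : Type} (R : word Y -> word Y -> Prop) : Prop :=
  exists lt : word Y -> word Y -> Prop,
    (forall u u' v v', cong R u u' -> cong R v v' -> lt u v -> lt u' v') /\
    (forall u, ~ lt u u) /\
    (forall u v w, lt u v -> lt v w -> lt u w) /\
    (forall u v, cong R u v \/ lt u v \/ lt v u) /\
    (forall u v w, lt u v -> lt (w ++ u) (w ++ v)).

(* Main.v *)
Require Import Defs.
From Stdlib Require Import List Bool ClassicalEpsilon.
Import ListNotations.

Lemma cong_app_l {Y} (R : word Y -> word Y -> Prop) w u v :
  cong R u v -> cong R (w ++ u) (w ++ v).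
Proof.
  induction 1.
  - rewrite !app_assoc. rewrite <- (app_assoc (w ++ u)), <- (app_assoc (w ++ u)).
    apply cong_base; assumption.
  - apply cong_refl.
  - apply cong_sym; assumption.
  - eapply cong_trans; eassumption.
Qed.

Lemma cong_app_r {Y} (R : word Y -> word Y -> Prop) w u v :
  cong R u v -> cong R (u ++ w) (v ++ w).
Proof.
  induction 1.
  - rewrite <- !app_assoc. apply cong_base; assumption.
  - apply cong_refl.
  - apply cong_sym; assumption.
  - eapply cong_trans; eassumption.
Qed.

Lemma cong_app {Y} (R : word Y -> word Y -> Prop) u u' v v' :
  cong R u u' -> cong R v v' -> cong R (u ++ v) (u' ++ v').
Proof.
  intros H1 H2. eapply cong_trans. apply cong_app_r; eassumption. apply cong_app_l; assumption.
Qed.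

Lemma inv_word_app {Y} (u v : word Y) : inv_word (u ++ v) = inv_word v ++ inv_word u.
Proof. unfold inv_word. rewrite map_app, rev_app_distr. reflexivity. Qed.

Lemma inv_letter_inv {Y} (l : Y * bool) : inv_letter (inv_letter l) = l.
Proof. destruct l as [y b]; unfold inv_letter; simpl; rewrite negb_involutive; reflexivity. Qed.

Lemma inv_word_inv {Y} (u : word Y) : inv_word (inv_word u) = u.
Proof.
  unfold inv_word. rewrite map_rev, rev_involutive, map_map.
  erewrite map_ext. apply map_id. intro; apply inv_letter_inv.
Qed.

Lemma inv_word_cons {Y} (l : Y * bool) u : inv_word (l :: u) = inv_word u ++ [inv_letter l].
Proof. reflexivity. Qed.

Section Gen.
Context {Y : Type} (R : word Y -> word Y -> Prop)
  (HF : forall l r, free_rel l r -> R l r).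

Lemma cong_cancel2 (a : Y * bool) : cong R [a; inv_letter a] [].
Proof.
  destruct a as [y b].
  pose proof (cong_base R [] [] [(y,b); (y, negb b)] [] (HF _ _ (ex_intro _ y (ex_intro _ b (conj eq_refl eq_refl))))).
  simpl in H. exact H.
Qed.

Lemma cong_inv_r (w : word Y) : cong R (w ++ inv_word w) [].
Proof.
  induction w as [|l w IH].
  - apply cong_refl.
  - rewrite inv_word_cons. simpl.
    replace (l :: w ++ inv_word w ++ [inv_letter l]) with ([l] ++ (w ++ inv_word w) ++ [inv_letter l])
      by (simpl; rewrite app_assoc; reflexivity).
    eapply cong_trans. apply cong_app_l. apply cong_app_r. exact IH.
    simpl. apply cong_cancel2.
Qed.

Lemma cong_inv_l (w : word Y) : cong R (inv_word w ++ w) [].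
Proof.
  pose proof (cong_inv_r (inv_word w)). rewrite inv_word_inv in H. exact H.
Qed.
End Gen.

Lemma free_free {Y} : forall l r : word Y, free_rel l r -> free_rel l r.
Proof. auto. Qed.

Lemma feq_inv {Y} (u v : word Y) : feq u v -> feq (inv_word u) (inv_word v).
Proof.
  unfold feq. induction 1.
  - rewrite !inv_word_app. destruct H as [y [b [-> ->]]].
    change (inv_word [(y, b); (y, negb b)]) with [(y, negb (negb b)); (y, negb b)].
    change (inv_word (@nil (Y*bool))) with (@nil (Y*bool)).
    rewrite <- !app_assoc. replace (y, negb b) with (y, negb (negb (negb b))) by (rewrite negb_involutive; reflexivity).
    apply cong_base. exists y, (negb (negb b)). split; reflexivity.
  - apply cong_refl.
  - apply cong_sym; assumption.
  - eapply cong_trans; eassumption.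
Qed.


Section Constr.
Context {X : Type} (g h : X) (hgh : g <> h).

Inductive cls := Cg | Ch | Cz.
Definition classify (x : X) : cls :=
  if excluded_middle_informative (x = g) then Cg
  else if excluded_middle_informative (x = h) then Ch else Cz.
Arguments classify : simpl never.

Lemma classify_g : classify g = Cg.
Proof. unfold classify. destruct (excluded_middle_informative (g = g)); congruence. Qed.
Lemma classify_h : classify h = Ch.
Proof. unfold classify. destruct (excluded_middle_informative (h = g)); [congruence|].
  destruct (excluded_middle_informative (h = h)); congruence. Qed.
Lemma classify_Cg x : classify x = Cg -> x = g.
Proof. unfold classify. destruct (excluded_middle_informative (x = g)); auto.
  destruct (excluded_middle_informative (x = h)); discriminate. Qed.
Lemma classify_Ch x : classify x = Ch -> x = h.
Proof. unfold classify. destruct (excluded_middle_informative (x = g)); [discriminate|].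
  destruct (excluded_middle_informative (x = h)); auto; discriminate. Qed.

Definition st := (bool * bool)%type.
Definition s0 : st := (false, false).
Definition step (s : st) (l : X * bool) : st :=
  match classify (fst l) with
  | Cg => (negb (fst s), snd s)
  | Ch => (fst s, negb (snd s))
  | Cz => s
  end.
Definition run (s : st) (w : word X) : st := fold_left step w s.

Lemma step_step s l : step (step s l) l = s.
Proof. destruct s as [a b]; unfold step; destruct (classify (fst l)); simpl; rewrite ?negb_involutive; reflexivity. Qed.
Lemma step_inv s l : step s (inv_letter l) = step s l.
Proof. reflexivity. Qed.

Lemma run_app s u v : run s (u ++ v) = run (run s u) v.
Proof. unfold run. apply fold_left_app. Qed.
Lemma run_cons s l u : run s (l :: u) = run (step s l) u.
Proof. reflexivity. Qed.

Lemma run_inv s w : run (run s w) (inv_word w) = s.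
Proof.
  revert s; induction w as [|l w IH]; intro s; [reflexivity|].
  rewrite inv_word_cons, run_app, (run_cons s l w), IH. simpl. rewrite step_inv. apply step_step.
Qed.

Definition G1 : X * bool := (g, true).
Definition Gi : X * bool := (g, false).
Definition H1 : X * bool := (h, true).
Definition Hi : X * bool := (h, false).

Definition rep (s : st) : word X :=
  match s with
  | (false, false) => []
  | (true, false) => [G1]
  | (false, true) => [H1]
  | (true, true) => [G1; H1]
  end.

Definition outpos (s : st) (x : X) : word X :=
  match classify x with
  | Cg => match s with
          | (false, false) => []
          | (true, false) => [G1; G1]
          | (false, true) => [H1; G1; Hi; Gi]
          | (true, true) => [Hi; Gi; Hi; Gi; Hi; Hi]
          end
  | Ch => match s with
          | (false, false) => []
          | (false, true) => [H1; H1]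
          | (true, false) => []
          | (true, true) => [Hi; Gi; Hi; Gi; Hi; Hi; G1; Hi; G1; Hi]
          end
  | Cz => rep s ++ [(x, true)] ++ inv_word (rep s)
  end.

Definition out (s : st) (l : X * bool) : word X :=
  if snd l then outpos s (fst l) else inv_word (outpos (step s l) (fst l)).

Fixpoint phi_from (s : st) (w : word X) : word X :=
  match w with
  | [] => []
  | l :: w' => out s l ++ phi_from (step s l) w'
  end.
Definition phi := phi_from s0.
Definition Aset (w : word X) : Prop := run s0 w = s0.

Lemma out_inv s l : out (step s l) (inv_letter l) = inv_word (out s l).
Proof.
  destruct l as [x [|]]; unfold out; simpl.
  - rewrite step_inv, step_step. reflexivity.
  - rewrite inv_word_inv. reflexivity.
Qed.

Lemma phi_app s u v : phi_from s (u ++ v) = phi_from s u ++ phi_from (run s u) v.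
Proof.
  revert s; induction u as [|l u IH]; intro s; [reflexivity|].
  simpl. rewrite IH, app_assoc. reflexivity.
Qed.

Lemma phi_feq u v : feq u v -> forall s, run s u = run s v /\ feq (phi_from s u) (phi_from s v).
Proof.
  unfold feq. induction 1; intro s.
  - destruct H as [y [b [-> ->]]].
    rewrite !run_app, !phi_app. simpl.
    replace (step (step (run s u) (y, b)) (y, negb b)) with (run s u)
      by (change (y, negb b) with (inv_letter (y,b)); rewrite step_inv, step_step; reflexivity).
    split; [reflexivity|].
    apply cong_app_l.
    change (y, negb b) with (inv_letter (y,b)). rewrite out_inv, app_nil_r.
    apply (cong_app_r _ _ _ []). apply cong_inv_r. apply free_free.
  - split; [reflexivity| apply cong_refl].
  - destruct (IHcong s). split; [auto| apply cong_sym; auto].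
  - destruct (IHcong1 s), (IHcong2 s). split; [congruence| eapply cong_trans; eauto].
Qed.


Lemma step_g s b : step s (g, b) = (negb (fst s), snd s).
Proof. unfold step; simpl; rewrite classify_g; reflexivity. Qed.
Lemma step_h s b : step s (h, b) = (fst s, negb (snd s)).
Proof. unfold step; simpl; rewrite classify_h; reflexivity. Qed.
Lemma step_z s x b : classify x = Cz -> step s (x, b) = s.
Proof. intro E; unfold step; simpl; rewrite E; reflexivity. Qed.
Lemma outpos_g s : outpos s g = match s with
          | (false, false) => []
          | (true, false) => [G1; G1]
          | (false, true) => [H1; G1; Hi; Gi]
          | (true, true) => [Hi; Gi; Hi; Gi; Hi; Hi]
          end.
Proof. unfold outpos; rewrite classify_g; reflexivity. Qed.
Lemma outpos_h s : outpos s h = match s with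
          | (false, false) => []
          | (false, true) => [H1; H1]
          | (true, false) => []
          | (true, true) => [Hi; Gi; Hi; Gi; Hi; Hi; G1; Hi; G1; Hi]
          end.
Proof. unfold outpos; rewrite classify_h; reflexivity. Qed.
Lemma outpos_z s x : classify x = Cz -> outpos s x = rep s ++ [(x, true)] ++ inv_word (rep s).
Proof. intro E; unfold outpos; rewrite E; reflexivity. Qed.

Ltac simp :=
  repeat progress (cbn [phi_from run fold_left app rev map inv_word inv_letter fst snd negb out rep];
                   unfold G1, Gi, H1, Hi, s0, inv_letter; cbn [fst snd negb];
                   rewrite ?step_g, ?step_h, ?outpos_g, ?outpos_h).

Lemma run_rep s : run s0 (rep s) = s.
Proof. destruct s as [[|] [|]]; simp; reflexivity. Qed.

Lemma run_outpos s x : run s0 (outpos s x) = s0.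
Proof.
  destruct (classify x) eqn:E.
  - apply classify_Cg in E; subst. destruct s as [[|] [|]]; simp; reflexivity.
  - apply classify_Ch in E; subst. destruct s as [[|] [|]]; simp; reflexivity.
  - rewrite outpos_z by exact E. rewrite !run_app, run_rep, run_cons, step_z by exact E.
    change (run s [] ) with s.
    transitivity (run (run s0 (rep s)) (inv_word (rep s))). rewrite run_rep; reflexivity. apply run_inv.
Qed.

Lemma run_out s l : run s0 (out s l) = s0.
Proof.
  destruct l as [x [|]]; unfold out; simpl.
  - apply run_outpos.
  - pose proof (run_inv s0 (outpos (step s (x, false)) x)).
    rewrite run_outpos in H. exact H.
Qed.

Lemma phi_inv s w : phi_from (run s w) (inv_word w) = inv_word (phi_from s w).
Proof.
  revert s; induction w as [|l w IH]; intro s; [reflexivity|].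
  rewrite inv_word_cons, phi_app, (run_cons s l w), IH, run_inv.
  simpl. rewrite app_nil_r, inv_word_app.
  change (inv_letter l) with (inv_letter l). rewrite <- step_inv with (l := l) at 1.
  rewrite out_inv. reflexivity.
Qed.

Lemma run_phi s u : run s0 (phi_from s u) = s0.
Proof.
  revert s; induction u as [|l u IH]; intro s; [reflexivity|].
  simpl. rewrite run_app, run_out. apply IH.
Qed.

Inductive two := TA | TB.
Definition e2 (l : two * bool) : X * bool := (match fst l with TA => g | TB => h end, snd l).
Definition two_eqb (a b : two) : bool :=
  match a, b with TA, TA => true | TB, TB => true | _, _ => false end.
Definition canc (a b : two * bool) : bool := two_eqb (fst a) (fst b) && xorb (snd a) (snd b).
Definition push (l : two * bool) (s : list (two * bool)) :=
  match s with
  | l' :: s' => if canc l l' then s' else l :: s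
  | [] => [l]
  end.
Definition red2 (w : list (two * bool)) := fold_right push [] w.

Lemma red2_feq w : feq (map e2 w) (map e2 (red2 w)).
Proof.
  induction w as [|l w IH]; [apply cong_refl|].
  simpl. eapply cong_trans. apply (cong_app_l _ [e2 l]). exact IH.
  simpl. destruct (red2 w) as [|l' s'] eqn:E; [apply cong_refl|].
  unfold push. destruct (canc l l') eqn:C; [|apply cong_refl].
  destruct l as [[|] b], l' as [[|] b']; unfold canc in C; simpl in C; try discriminate;
  (assert (b' = negb b) by (destruct b, b'; simpl in *; congruence); subst b';
   simpl; apply (cong_base _ [] (map e2 s') [(_, b); (_, negb b)] []); eexists; eexists; split; reflexivity).
Qed.

Lemma feq_red w1 w2 : red2 w1 = red2 w2 -> feq (map e2 w1) (map e2 w2).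
Proof.
  intro E. eapply cong_trans. apply red2_feq. rewrite E. apply cong_sym, red2_feq.
Qed.

Ltac reify l :=
  lazymatch l with
  | nil => constr:(@nil (two*bool))
  | cons (g, ?b) ?r => let r' := reify r in constr:(cons (TA, b) r')
  | cons (h, ?b) ?r => let r' := reify r in constr:(cons (TB, b) r')
  end.
Ltac solve_feq := lazymatch goal with |- feq ?u ?v =>
  let u' := reify u in let v' := reify v in
  change (feq (map e2 u') (map e2 v')); apply feq_red; vm_compute; reflexivity end.

Definition gam (s : st) (l : X * bool) : word X := rep s ++ [l] ++ inv_word (rep (step s l)).

Lemma phi_rep s : phi (rep s) = [].
Proof. unfold phi. destruct s as [[|] [|]]; simp; reflexivity. Qed.

Lemma edge_pos s x : feq (phi (out s (x, true))) (gam s (x, true)).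
Proof.
  destruct (classify x) eqn:E.
  - apply classify_Cg in E; subst. unfold phi, gam. destruct s as [[|] [|]]; simp; solve_feq.
  - apply classify_Ch in E; subst. unfold phi, gam. destruct s as [[|] [|]]; simp; solve_feq.
  - unfold out; simpl. rewrite outpos_z by exact E. unfold phi.
    rewrite !phi_app. fold phi. rewrite phi_rep, run_rep. simpl.
    rewrite step_z by exact E.
    assert (Hq : phi_from s (inv_word (rep s)) = []).
    { pose proof (phi_inv s0 (rep s)) as Hp. rewrite run_rep in Hp. rewrite Hp.
      fold phi. rewrite phi_rep. reflexivity. }
    rewrite Hq.
    unfold out; simpl. rewrite outpos_z by exact E. unfold gam. rewrite step_z by exact E.
    rewrite !app_nil_r. apply cong_refl.
Qed.

Lemma edge s l : feq (phi (out s l)) (gam s l).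
Proof.
  destruct l as [x [|]]; [apply edge_pos|].
  set (s' := step s (x, false)).
  unfold out; simpl. fold s'.
  change (outpos s' x) with (out s' (x, true)).
  pose proof (phi_inv s0 (out s' (x, true))). rewrite run_out in H. unfold phi. rewrite H. fold phi.
  eapply cong_trans. apply feq_inv, edge_pos.
  unfold gam. rewrite !inv_word_app, inv_word_inv, app_assoc.
  assert (step s' (x, true) = s) by (unfold s'; rewrite <- (step_inv s (x,true)) at 1; simpl; 
     change (x, true) with (inv_letter (x, false)); rewrite step_inv; apply step_step).
  rewrite H0. unfold s'. simpl. rewrite <- !app_assoc. apply cong_refl.
Qed.

Lemma tel u s : feq (phi (phi_from s u)) (rep s ++ u ++ inv_word (rep (run s u))).
Proof.
  revert s; induction u as [|l u IH]; intro s.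
  - simpl. apply cong_sym. apply cong_inv_r. apply free_free.
  - change (phi_from s (l :: u)) with (out s l ++ phi_from (step s l) u).
    change (run s (l::u)) with (run (step s l) u).
    unfold phi at 1. rewrite phi_app, run_out. fold phi.
    eapply cong_trans. apply cong_app. apply edge. apply IH.
    unfold gam. set (s' := step s l).
    set (Q := u ++ inv_word (rep (run s' u))).
    replace ((rep s ++ [l] ++ inv_word (rep s')) ++ rep s' ++ Q)
      with ((rep s ++ [l]) ++ (inv_word (rep s') ++ rep s') ++ Q) by (rewrite <- !app_assoc; reflexivity).
    replace (rep s ++ (l :: u) ++ inv_word (rep (run s' u))) with ((rep s ++ [l]) ++ [] ++ Q) by (unfold Q; rewrite <- app_assoc; reflexivity).
    apply cong_app_l, cong_app_r, cong_inv_l. apply free_free.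
Qed.

Lemma phi_phi u : Aset u -> feq (phi (phi u)) u.
Proof.
  intro Au. pose proof (tel u s0). unfold Aset in Au. rewrite Au in H. simpl in H.
  rewrite app_nil_r in H. exact H.
Qed.

Lemma A_subgroup : is_subgroup Aset.
Proof.
  unfold is_subgroup, Aset. split; [reflexivity|]. split; [|split].
  - intros u v Hu Hv. rewrite run_app, Hu. exact Hv.
  - intros u Hu. pose proof (run_inv s0 u). rewrite Hu in H. exact H.
  - intros u v H Hu. rewrite <- (proj1 (phi_feq u v H s0)). exact Hu.
Qed.

Lemma phi_iso : is_iso Aset Aset phi.
Proof.
  unfold is_iso. split; [|split; [|split; [|split]]].
  - intros u v _ H. exact (proj2 (phi_feq u v H s0)).
  - intros u _. apply run_phi.
  - intros u v Hu _. unfold phi. rewrite phi_app. unfold Aset in Hu. rewrite Hu. apply cong_refl.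
  - intros u v Hu Hv H. eapply cong_trans. apply cong_sym, phi_phi, Hu.
    eapply cong_trans. apply (proj2 (phi_feq _ _ H s0)). apply phi_phi, Hv.
  - intros w Hw. exists (phi w). split; [apply run_phi| apply phi_phi, Hw].
Qed.

Definition RH := hnn_rel Aset phi.

Lemma HF_R : forall l r, free_rel l r -> RH l r.
Proof. intros; left; assumption. Qed.

Lemma lift_feq p q : feq p q -> cong RH (liftw p) (liftw q).
Proof.
  unfold feq. induction 1.
  - unfold liftw. rewrite !map_app. apply cong_base, HF_R.
    destruct H as [y [b [-> ->]]]. exists (Some y), b. split; reflexivity.
  - apply cong_refl.
  - apply cong_sym; assumption.
  - eapply cong_trans; eassumption.
Qed.

Definition prime (a : word X) : word (option X) := (None, true) :: liftw a ++ [(None, false)].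

Lemma hnn_conj a : Aset a -> cong RH (prime a) (liftw (phi a)).
Proof.
  intro Ha. pose proof (cong_base RH [] [] (prime a) (liftw (phi a))) as H.
  simpl in H. rewrite !app_nil_r in H. apply H. right. exists a. split; [exact Ha|]. split; reflexivity.
Qed.

Lemma prime_app u v : cong RH (prime u ++ prime v) (prime (u ++ v)).
Proof.
  pose proof (cong_base RH ((None,true) :: liftw u) (liftw v ++ [(None,false)])
     [(None,false); (None,true)] []) as H.
  replace (prime u ++ prime v) with
    (((None,true) :: liftw u) ++ [(None,false); (None,true)] ++ (liftw v ++ [(None,false)]))
    by (unfold prime; simpl; rewrite <- !app_assoc; reflexivity).
  replace (prime (u ++ v)) with (((None,true) :: liftw u) ++ [] ++ (liftw v ++ [(None,false)]))
    by (unfold prime, liftw; rewrite map_app; simpl; rewrite <- !app_assoc; reflexivity).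
  apply H, HF_R. exists None, false. split; reflexivity.
Qed.

Definition sx (s t : st) : st := (xorb (fst s) (fst t), xorb (snd s) (snd t)).

Lemma step_sx s t l : step (sx s t) l = sx s (step t l).
Proof.
  unfold step. destruct (classify (fst l)); destruct s as [a b], t as [c d]; unfold sx; simpl;
  rewrite ?negb_xorb_r; reflexivity.
Qed.

Lemma run_sx w : forall s t, run (sx s t) w = sx s (run t w).
Proof.
  induction w as [|l w IH]; intros s t; [reflexivity|].
  rewrite !run_cons, step_sx. apply IH.
Qed.

Lemma run_A s a : Aset a -> run s a = s.
Proof.
  intro Ha. replace s with (sx s s0) at 1 by (destruct s as [[|] [|]]; reflexivity).
  rewrite run_sx. unfold Aset in Ha. rewrite Ha. destruct s as [[|] [|]]; reflexivity.
Qed.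

Definition stepH (s : st) (l : option X * bool) : st :=
  match fst l with None => s | Some x => step s (x, snd l) end.
Definition runH (s : st) (w : word (option X)) : st := fold_left stepH w s.

Lemma runH_app s u v : runH s (u ++ v) = runH (runH s u) v.
Proof. unfold runH. apply fold_left_app. Qed.

Lemma runH_liftw s w : runH s (liftw w) = run s w.
Proof.
  revert s; induction w as [|[x b] w IH]; intro s; [reflexivity|]. simpl. apply IH.
Qed.

Lemma cong_runH u v : cong RH u v -> forall s, runH s u = runH s v.
Proof.
  induction 1; intro s.
  - rewrite !runH_app. f_equal.
    destruct H as [H|[a [Ha [-> ->]]]].
    + destruct H as [[y|] [b [-> ->]]]; [|reflexivity].
      unfold runH; simpl. unfold stepH; simpl.
      change (y, negb b) with (inv_letter (y, b)). rewrite step_inv. apply step_step.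
    + change (runH (runH s u) ((None, true) :: liftw a ++ [(None, false)]))
        with (runH (runH (runH s u) [(None,true)]) (liftw a ++ [(None, false)])).
      rewrite runH_app. change (runH (runH s u) [(None,true)]) with (runH s u).
      change (runH ?z [(None,false)]) with z.
      rewrite !runH_liftw. rewrite !run_A; auto. apply run_phi.
  - reflexivity.
  - symmetry; auto.
  - etransitivity; eauto.
Qed.

Lemma nontriv w : runH s0 w <> s0 -> ~ cong RH w [].
Proof. intros H C. apply H. apply (cong_runH _ _ C s0). Qed.

Lemma sq_fix x b : (x = g \/ x = h) -> Aset [(x,b);(x,b)] /\ feq (phi [(x,b);(x,b)]) [(x,b);(x,b)].
Proof.
  intros [-> | ->]; destruct b; unfold Aset, phi; split; simp; try reflexivity; solve_feq.
Qed.

Definition W4 (bg bh : bool) : word X :=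
  if bg then [(g,bg);(h,bh);(g,bg);(h,bh)] else [(h,bh);(g,bg);(h,bh);(g,bg)].

Lemma W4_fact bg bh : Aset (W4 bg bh) /\ feq (phi (W4 bg bh)) (inv_word (W4 bg bh)).
Proof.
  destruct bg, bh; unfold W4, Aset, phi; split; simp; try reflexivity; solve_feq.
Qed.

Lemma not_LO : ~ left_orderable_pres RH.
Proof.
  intros [lt [Hc [Hirr [Htr [Htot Hinv]]]]].
  set (pos := fun w => lt [] w).
  assert (pos_app : forall a b, pos a -> pos b -> pos (a ++ b)).
  { intros a b Ha Hb. unfold pos in *. eapply Htr. exact Ha.
    pose proof (Hinv [] b a Hb). rewrite app_nil_r in H. exact H. }
  assert (pos_cong : forall a b, cong RH a b -> pos a -> pos b).
  { intros a b Hab Ha. unfold pos in *. eapply Hc; [apply cong_refl| exact Hab| exact Ha]. }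
  assert (contra : forall a b, pos a -> pos b -> cong RH (a ++ b) [] -> False).
  { intros a b Ha Hb C. apply (Hirr []). apply (pos_cong _ _ C (pos_app _ _ Ha Hb)). }
  assert (tri : forall w, ~ cong RH w [] -> pos w \/ pos (inv_word w)).
  { intros w Hw. destruct (Htot [] w) as [C|[L|L]].
    - exfalso; apply Hw, cong_sym, C.
    - left; exact L.
    - right. pose proof (Hinv w [] (inv_word w) L) as L2.
      eapply Hc; [| |exact L2]. apply cong_inv_l, HF_R. rewrite app_nil_r; apply cong_refl. }
  assert (letter : forall x, (x = g \/ x = h) -> exists b, pos (liftw [(x,b)])).
  { intros x Hx. destruct (tri (liftw [(x,true)])) as [P|P].
    - apply nontriv. unfold runH; simpl. unfold stepH; simpl.
      destruct Hx as [->| ->]; rewrite ?step_g, ?step_h; simpl; discriminate.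
    - exists true; exact P.
    - exists false; exact P. }
  assert (pprime : forall x b, (x = g \/ x = h) -> pos (liftw [(x,b)]) -> pos (prime [(x,b)])).
  { intros x b Hx P. destruct (tri (prime [(x,b)])) as [Q|Q].
    - apply nontriv. unfold runH, prime; simpl. unfold stepH; simpl.
      destruct Hx as [->| ->]; rewrite ?step_g, ?step_h; destruct b; simpl; discriminate.
    - exact Q.
    - exfalso. change (inv_word (prime [(x,b)])) with (prime [(x, negb b)]) in Q.
      destruct (sq_fix x (negb b) Hx) as [HA HE].
      apply (contra (liftw [(x,b);(x,b)]) (liftw [(x,negb b);(x,negb b)])).
      + apply (pos_app (liftw [(x,b)]) (liftw [(x,b)])); exact P.
      + eapply pos_cong; [| apply (pos_app _ _ Q Q)].
        eapply cong_trans. apply prime_app.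
        eapply cong_trans. apply (hnn_conj _ HA). exact (lift_feq _ _ HE).
      + change (liftw [(x,b);(x,b)] ++ liftw [(x,negb b);(x,negb b)])
          with (liftw ([(x,b);(x,b)] ++ inv_word [(x,b);(x,b)])).
        apply (lift_feq _ []). apply cong_inv_r, free_free. }
  assert (pp : forall u v, pos (prime u) -> pos (prime v) -> pos (prime (u ++ v))).
  { intros u v Pu Pv. eapply pos_cong. apply prime_app. apply pos_app; assumption. }
  destruct (letter g (or_introl eq_refl)) as [bg Pg].
  destruct (letter h (or_intror eq_refl)) as [bh Ph].
  pose proof (pprime g bg (or_introl eq_refl) Pg) as Qg.
  pose proof (pprime h bh (or_intror eq_refl) Ph) as Qh.
  destruct (W4_fact bg bh) as [HA HE].
  apply (contra (liftw (W4 bg bh)) (liftw (inv_word (W4 bg bh)))).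
  - destruct bg; unfold W4.
    + change (pos (liftw [(g,true)] ++ liftw [(h,bh)] ++ liftw [(g,true)] ++ liftw [(h,bh)])).
      apply pos_app; [exact Pg|]. apply pos_app; [exact Ph|]. apply pos_app; [exact Pg|exact Ph].
    + change (pos (liftw [(h,bh)] ++ liftw [(g,false)] ++ liftw [(h,bh)] ++ liftw [(g,false)])).
      apply pos_app; [exact Ph|]. apply pos_app; [exact Pg|]. apply pos_app; [exact Ph|exact Pg].
  - eapply pos_cong. eapply cong_trans. apply (hnn_conj _ HA). apply (lift_feq _ _ HE).
    destruct bg; unfold W4.
    + change (pos (prime ([(g,true)] ++ [(h,bh)] ++ [(g,true)] ++ [(h,bh)]))).
      apply pp; [exact Qg|]. apply pp; [exact Qh|]. apply pp; [exact Qg|exact Qh].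
    + change (pos (prime ([(h,bh)] ++ [(g,false)] ++ [(h,bh)] ++ [(g,false)]))).
      apply pp; [exact Qh|]. apply pp; [exact Qg|]. apply pp; [exact Qh|exact Qg].
  - unfold liftw at 1 2. rewrite <- map_app. fold (liftw (W4 bg bh ++ inv_word (W4 bg bh))).
    change (@nil (option X * bool)) with (liftw (@nil (X * bool))).
    apply lift_feq, cong_inv_r, free_free.
Qed.

End Constr.

Theorem theorem1p2 (X : Type) (hX : exists x y : X, x <> y) :
  exists (A B : word X -> Prop) (phi : word X -> word X),
    is_subgroup A /\ is_subgroup B /\ is_iso A B phi /\
    ~ left_orderable_pres (hnn_rel A phi).
Proof.
  destruct hX as [x [y hxy]].
  exists (Aset x y), (Aset x y), (phi x y).
  split; [apply A_subgroup|]. split; [apply A_subgroup|]. split.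
  - exact (phi_iso x y hxy).
  - exact (not_LO x y hxy).
Qed.
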